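(* Let $k\ge 4$, $n=2k-1$, $\eta=(\eta_1<\dots<\eta_l)\in\mathbb{D}_k\setminus\{(3,k-3)\}$, and let $Y_{2\eta^*}$ be the Young diagram whose main diagonal consists of exactly the cells $c_{1,1},\dots,c_{l+1,l+1}$ and which satisfies $h_{1,1}=2n-4$, $h_{i,i}=2\eta_{l-(i-2)}$ for $2\le i\le l+1$, and $a(c_{i,i})=l(c_{i,i})+1$ for $1\le i\le l+1$. Let $\lambda$ be the partition whose parts are the hook lengths of the first-column cells of $Y_{2\eta^*}$. Then: (1) $\lambda$ has exactly $n-2$ parts; (2) its largest part is $\lambda_{n-2}=2n-4$; (3) its number of missing parts is $\#\mathcal{M}_\lambda=n-2$.
   Context: $\mathbb{D}_N$ is the set of partitions of $N$ into distinct parts, i.e. sequences $(\eta_1<\dots<\eta_l)$ of positive integers with sum $N$ and $l\ge 2$. For a partition $\lambda=(\lambda_1<\dots<\lambda_t)$ into distinct parts, $\mathcal{M}_\lambda=\{1,\dots,\lambda_t\}\setminus\{\lambda_1,\dots,\lambda_t\}$. Young diagrams are in English convention: rows top to bottom, columns left to right, $c_{i,j}$ the cell in row $i$, column $j$; arm $a(c_{i,j})$ = number of cells to its right in its row, leg $l(c_{i,j})$ = number of cells below it in its column, hook length $h_{i,j}=a+l+1$. *)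

(* Defs.v *)
(* Young diagrams as sequences of row lengths (English convention),
   cells indexed 1-based: c_{i,j} = row i, column j. *)
From mathcomp Require Import all_boot.
Set Implicit Arguments. Unset Strict Implicit. Unset Printing Implicit Defensive.

Definition is_young (Y : seq nat) : bool := sorted geq Y && all (fun r => 0 < r) Y.

(* length of row i (1-based); 0 if the row does not exist *)
Definition row_len (Y : seq nat) (i : nat) : nat := nth 0 Y i.-1.
Definition col_len (Y : seq nat) (j : nat) : nat := count (fun r => j <= r) Y.

Definition in_cell (Y : seq nat) (i j : nat) : bool :=
  [&& 0 < i, 0 < j & j <= row_len Y i].

Definition arm (Y : seq nat) (i j : nat) : nat := row_len Y i - j.
Definition leg (Y : seq nat) (i j : nat) : nat := col_len Y j - i.
Definition hook (Y : seq nat) (i j : nat) : nat := arm Y i j + leg Y i j + 1.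

Definition in_D (N : nat) (eta : seq nat) : bool :=
  [&& sorted ltn eta, all (fun x => 0 < x) eta, sumn eta == N & 2 <= size eta].

Definition part (eta : seq nat) (i : nat) : nat := nth 0 eta i.-1.

Definition is_Y2eta (n : nat) (eta : seq nat) (Y : seq nat) : Prop :=
  let l := size eta in
  [/\ is_young Y,
      (forall i, 0 < i -> in_cell Y i i = (i <= l.+1)),
      hook Y 1 1 = 2 * n - 4,
      (forall i, 2 <= i <= l.+1 -> hook Y i i = 2 * part eta (l - (i - 2))) &
      (forall i, 1 <= i <= l.+1 -> arm Y i i = leg Y i i + 1)].

(* the partition (increasing order lambda_1 < ... < lambda_t) whose parts are the
   hook lengths of the first-column cells of Y *)
Definition first_col_hooks (Y : seq nat) : seq nat :=
  rev [seq hook Y i 1 | i <- iota 1 (size Y)].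

Definition missing (lam : seq nat) : seq nat :=
  [seq m <- iota 1 (last 0 lam) | m \notin lam].

(* Main.v *)
Require Import Defs.
From mathcomp Require Import all_boot zify.
Set Warnings "-notation-overridden".

Lemma mem_le_sumn (s : seq nat) x : x \in s -> x <= sumn s.
Proof.
elim: s => [|y s IH] //=; rewrite in_cons => /orP[/eqP->|/IH]; lia.
Qed.

Lemma count_iota_le m N : m <= N -> count (fun i => i <= m) (iota 1 N) = m.
Proof.
move=> h; rewrite -(subnKC h) iotaD count_cat.
rewrite (@eq_in_count _ _ predT (iota 1 m)); last by move=> x; rewrite mem_iota /= => /andP[_ ?]; apply/idP; lia.
rewrite (@eq_in_count _ _ pred0 (iota (1 + m) (N - m))); last by move=> x; rewrite mem_iota /= => /andP[? _]; apply/negP; lia.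
by rewrite count_predT count_pred0 size_iota addn0.
Qed.

Lemma count_prefix (P : pred nat) d j :
  (forall a b, 1 <= a <= b -> b <= d -> P b -> P a) -> 1 <= j <= d ->
  (j <= count P (iota 1 d)) = P j.
Proof.
move=> hP hj; case Pj: (P j).
- have e : d = j + (d - j) by lia.
  rewrite e iotaD count_cat (@eq_in_count _ _ predT (iota 1 j)).
    by rewrite count_predT size_iota leq_addr.
  move=> x; rewrite mem_iota => /andP[? ?]; apply: (hP x j) => //; lia.
- have e : d = (j - 1) + (d - (j - 1)) by lia.
  rewrite e iotaD count_cat (@eq_in_count _ _ pred0 (iota (1 + (j-1)) _)).
    rewrite count_pred0 addn0; apply/negbTE; rewrite -ltnNge.
    have := count_size P (iota 1 (j-1)); rewrite size_iota; lia.
  move=> x; rewrite mem_iota => /andP[? ?] /=; apply/negbTE/negP => Px.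
  have := hP j x; rewrite Pj => H; have : false by apply: H => //; lia.
  done.
Qed.

Lemma path_map_iota (f : nat -> nat) m N :
  (forall i, m <= i -> i.+1 <= m + N -> f i.+1 <= f i) ->
  path geq (f m) (map f (iota m.+1 N)).
Proof.
elim: N m => [|N IH] m h //=.
rewrite h ?IH //; try lia.
move=> i hi hi2; apply: h; lia.
Qed.

Lemma nonincr (f : nat -> nat) a b :
  (forall i, a <= i -> i < b -> f i.+1 <= f i) ->
  forall i j, a <= i -> i <= j -> j <= b -> f j <= f i.
Proof.
move=> h i j hi; elim: j => [|j IH] hij hjb.
  by have -> : i = 0 by lia.
case: (ltngtP i j.+1) => c; [|lia|by rewrite c].
apply: leq_trans (h j _ _) (IH _ _); lia.
Qed.


Lemma predn_sub1 m : m.-1 = m - 1.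
Proof. by case: m => //= m; rewrite subn1. Qed.

Definition cc (n : nat) (eta : seq nat) (i : nat) : nat :=
  if i == 1 then n - 2 else part eta (size eta - (i - 2)) + i - 1.
Definition rr n eta i :=
  if i <= (size eta).+1 then cc n eta i + 1
  else count (fun j => i <= cc n eta j) (iota 1 (size eta).+1).
Definition YY n eta := map (rr n eta) (iota 1 (n - 2)).

Lemma cc_facts k eta : 4 <= k -> in_D k eta ->
  let n := 2 * k - 1 in let d := (size eta).+1 in
  [/\ cc n eta 1 = n - 2,
      (forall i j, 1 <= i -> i <= j -> j <= d -> cc n eta j <= cc n eta i) &
      (forall j, 1 <= j <= d -> d <= cc n eta j)].
Proof.
move=> k4 /and4P[so po /eqP su sz] n d.
have F1 : forall i, 1 <= i -> i < d -> cc n eta i.+1 <= cc n eta i.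
  move=> i i1 hid; rewrite /cc /part.
  case: (i =P 1) => [->|/eqP i2] /=.
    rewrite subnn subn0.
    have : nth 0 eta (size eta).-1 <= k.
      rewrite -su; apply: mem_le_sumn; apply: mem_nth; rewrite predn_sub1; set m := size _ in sz *; lia.
    rewrite /n /d in hid *; lia.
  have e1 : (size eta - (i.+1 - 2)).-1 = size eta - i by rewrite predn_sub1; lia.
  have e2 : (size eta - (i - 2)).-1 = (size eta - i).+1 by rewrite predn_sub1; lia.
  rewrite e1 e2.
  have : nth 0 eta (size eta - i) < nth 0 eta (size eta - i).+1.
    apply: (sorted_ltn_nth ltn_trans) => //; rewrite inE /=; rewrite /d in hid; lia.
  have -> : (i.+1 == 1) = false by apply/negbTE; lia.
  lia.
have F2 := @nonincr (cc n eta) 1 d F1.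
split => //.
move=> j /andP[j1 jd].
apply: leq_trans (F2 _ _ j1 jd (leqnn _)).
rewrite /cc /d; have -> : ((size eta).+1 == 1) = false by apply/negbTE; lia.
have : 0 < part eta (size eta - ((size eta).+1 - 2)).
  rewrite /part; apply: (allP po); apply: mem_nth; set m := size _ in sz *; lia.
lia.
Qed.


Lemma YY_ok k eta : 4 <= k -> in_D k eta ->
  is_Y2eta (2 * k - 1) eta (YY (2 * k - 1) eta).
Proof.
move=> k4 hD; have [c1 mono cd] := @cc_facts k eta k4 hD.
have hD' := hD; move/and4P: hD' => [so po /eqP su sz].
set n := 2 * k - 1 in c1 mono cd *.
set d := (size eta).+1 in mono cd *.
set c := cc n eta in c1 mono cd *.
have dn : d <= n - 2 by rewrite -c1; apply: cd; lia.
have RL : forall i, 1 <= i <= n - 2 -> row_len (YY n eta) i = rr n eta i.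
  move=> i hi; rewrite /row_len /YY (nth_map 0) ?size_iota ?nth_iota; try lia.
  by congr rr; lia.
have RL0 : forall i, n - 2 < i -> row_len (YY n eta) i = 0.
  move=> i hi; rewrite /row_len nth_default // size_map size_iota; lia.
have big : forall i, d < i -> i <= n - 2 ->
    forall j, 1 <= j <= d -> (j <= rr n eta i) = (i <= c j).
  move=> i hi1 hi2 j hj; rewrite /rr ifF; last by apply/negbTE; rewrite -ltnNge.
  apply: (@count_prefix (fun j => i <= cc n eta j)) => // a b hab hb /= hib.
  apply: leq_trans hib (mono _ _ _ _ _); lia.
have rpos : forall i, 1 <= i <= n - 2 -> 0 < rr n eta i.
  move=> i hi; case: (leqP i d) => hid.
    by rewrite /rr hid addn1.
  by rewrite big //; try lia; rewrite -/c c1; lia.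
have rmono : forall i, 1 <= i -> i.+1 <= n - 2 -> rr n eta i.+1 <= rr n eta i.
  move=> i hi1 hi2; rewrite /rr.
  case: (leqP i.+1 d) => h1.
    rewrite (leq_trans (ltnW h1)) ?leqnn // leq_add2r; exact: (mono i i.+1).
  case: (leqP i d) => h2.
    have := count_size (fun j => i.+1 <= cc n eta j) (iota 1 d).
    rewrite size_iota -/d; have := cd i; rewrite -/c; lia.
  apply: sub_count => j /=; lia.
have CL : forall j, 1 <= j <= d -> col_len (YY n eta) j = c j.
  move=> j hj; rewrite /col_len /YY count_map.
  rewrite (@eq_in_count _ _ (fun i => i <= c j)).
    apply: count_iota_le; rewrite -c1; apply: mono; lia.
  move=> i; rewrite mem_iota => hi /=.
  case: (leqP i d) => hid.
    rewrite /rr hid.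
    have := cd i; have := cd j; rewrite -/c.
    have : c j <= c i \/ i > j by case: (leqP i j) => ?; [left; apply: mono|right]; lia.
    move=> H H1 H2; apply/idP/idP => _; lia.
  by apply: big; lia.
have hc : forall i, 1 <= i <= d -> i <= c i by move=> i hi; have := cd i hi; lia.
split.
- apply/andP; split.
    rewrite /YY; case: (n - 2) rmono => [|N] rmono //=.
    apply: path_map_iota => i hi1 hi2; apply: rmono; lia.
  apply/allP => x; rewrite /YY => /mapP[i]; rewrite mem_iota => hi ->.
  apply: rpos; lia.
- move=> i hi; rewrite /in_cell hi /=.
  case: (leqP i (n - 2)) => hin.
    rewrite RL; last lia.
    case: (leqP i d) => hid.
      rewrite /rr hid; have := hc i; rewrite -/c; lia.
    rewrite /rr ifF; last (by apply/negbTE; rewrite -ltnNge); apply/negbTE; rewrite -ltnNge.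
    have := count_size (fun j => i <= cc n eta j) (iota 1 d); rewrite size_iota; rewrite /d in hid *; lia.
  rewrite RL0 //; lia.
- rewrite /hook /arm /leg CL ?RL /rr /=; try lia.
  rewrite -/c c1; lia.
- move=> i hi; rewrite /hook /arm /leg CL ?RL /rr; try lia.
  have := hc i; rewrite (_ : i <= d) ?leqnn; last lia.
  rewrite /c /cc; have -> : (i == 1) = false by apply/negbTE; lia.
  lia.
- move=> i hi; rewrite /arm /leg CL ?RL /rr; try lia.
  rewrite (_ : i <= d); last lia.
  have := hc i; rewrite -/c; lia.
Qed.


Lemma part2 n Y : 7 <= n -> is_young Y -> hook Y 1 1 = 2 * n - 4 ->
  arm Y 1 1 = leg Y 1 1 + 1 ->
  let lam := first_col_hooks Y in
  [/\ size lam = n - 2, nth 0 lam (n - 2).-1 = 2 * n - 4 &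
      size (missing lam) = n - 2].
Proof.
move=> n7 /andP[so po] hk ha lam.
have cl1 : col_len Y 1 = size Y by rewrite /col_len; apply/eqP; rewrite -all_count.
have hN : size Y = n - 2.
  move: hk ha; rewrite /hook /arm /leg cl1; set m := size _; lia.
set N := size Y in cl1 hN.
have RLpos : forall i, 1 <= i <= N -> 0 < row_len Y i.
  move=> i hi; rewrite /row_len; apply: (allP po); apply: mem_nth.
  rewrite /N in hi; set m := size _ in hi *; lia.
have RLmono : forall i j, 1 <= i -> i <= j -> j <= N -> row_len Y j <= row_len Y i.
  move=> i j h1 h2 h3; rewrite /row_len.
  have := @sorted_leq_nth _ geq (fun y x z h1 h2 => leq_trans h2 h1) leqnn 0 Y so i.-1 j.-1.
  rewrite !inE; apply; rewrite /N in h3; set m := size _ in h3 *; lia.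
have HK : forall i, hook Y i 1 = row_len Y i - 1 + (N - i) + 1.
  by move=> i; rewrite /hook /arm /leg cl1.
have hk1 : hook Y 1 1 = 2 * n - 4 by [].
have sl : size lam = n - 2 by rewrite /lam /first_col_hooks size_rev size_map size_iota.
have nl : nth 0 lam (n - 2).-1 = 2 * n - 4.
  rewrite /lam /first_col_hooks nth_rev size_map size_iota; last lia.
  rewrite (nth_map 0) ?size_iota ?nth_iota; try lia.
  by rewrite (_ : 1 + _ = 1) //; lia.
split => //.
have ul : uniq lam.
  rewrite /lam /first_col_hooks rev_uniq map_inj_in_uniq ?iota_uniq //.
  move=> i j; rewrite !mem_iota => hi hj; rewrite !HK.
  have := RLpos i; have := RLpos j.
  case: (leqP i j) => c.
    have := RLmono i j; lia.
  have := RLmono j i; lia.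
have lb : forall x, x \in lam -> x \in iota 1 (2 * n - 4).
  move=> x; rewrite /lam /first_col_hooks mem_rev => /mapP[i]; rewrite mem_iota => hi ->.
  rewrite mem_iota HK; have := RLmono 1 i; have := HK 1; rewrite hk1; lia.
have ll : last 0 lam = 2 * n - 4 by rewrite -nth_last sl.
rewrite /missing ll size_filter.
have E := count_predC (fun m => m \in lam) (iota 1 (2 * n - 4)).
have -> : count (fun m => m \notin lam) (iota 1 (2 * n - 4))
        = count (predC (fun m => m \in lam)) (iota 1 (2 * n - 4)) by [].
have C : count (fun m => m \in lam) (iota 1 (2 * n - 4)) = size lam.
  rewrite -size_filter; apply: perm_size; apply: uniq_perm.
  - by rewrite filter_uniq ?iota_uniq.
  - exact: ul.
  - move=> x; rewrite mem_filter; apply/andP/idP => [[]//|h]; split => //; exact: lb.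
move: E; rewrite C size_iota sl; lia.
Qed.

Theorem corollary3p16 (k : nat) (eta : seq nat) :
  4 <= k ->
  in_D k eta ->
  eta != [:: 3; k - 3] ->
  let n := 2 * k - 1 in
  (exists Y, is_Y2eta n eta Y) /\
  (forall Y, is_Y2eta n eta Y ->
     let lam := first_col_hooks Y in
     [/\ size lam = n - 2,
         nth 0 lam (n - 2).-1 = 2 * n - 4 &
         size (missing lam) = n - 2]).
Proof.
move=> k4 hD _ n; split.
  by exists (YY n eta); exact: YY_ok.
move=> Y [yy _ hk _ ha]; apply: part2 => //; first by rewrite /n; lia.
by apply: ha.
Qed.
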